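(* Let $X=(X_1,\ldots,X_q)^T$ be a vector of mutually independent Poisson random variables with means $\lambda=(\lambda_1,\ldots,\lambda_q)^T$. Let $A=(a_{i,j}) \in \{0,1\}^{\ell\times q}$ have pairwise distinct nonzero columns and let $Y = AX$, with cumulant generating function $K_Y(t)=\log E[e^{t^TY}]$. Let $\mathcal B_0 = \{0,1\}^\ell\setminus\{0\}$ with the componentwise order $\le$ (and $<$ meaning $\le$ and $\neq$), let $\mathcal A\subseteq\mathcal B_0$ be the set of columns of $A$, and let $\rho:\mathcal B_0\to\mathbb{R}$ be $\rho(a_{*,j})=\lambda_j$ and $\rho(v)=0$ for $v\notin\mathcal A$. For $v\in\mathcal B_0$ with support $\{i_1<\cdots<i_p\}$ let $\phi(v)=\frac{\partial^p}{\partial t_{i_1}\cdots\partial t_{i_p}}K_Y(t)\big|_{t=0}$. Let $\uparrow v=\{w\in\mathcal B_0: v\le w\}$ and define $\psi:\mathcal B_0\to\mathbb{R}$ as the solution of the recurrence \[\psi(v) = \phi(v) - \sum_{w\in \uparrow v\setminus\{v\}}\psi(w)\quad (v\in\mathcal B_0).\] Then $\psi(v)=\rho(v)$ for every $v\in\mathcal B_0$. Moreover, if $\psi(v)\neq 0$, then $v\in\mathcal A$.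
   Context: The recurrence determines $\psi$ uniquely since $\mathcal B_0$ is finite and $\psi(v)$ depends only on values at strictly larger elements. $a_{*,j}$ is the $j$-th column of $A$. *)

(* Defs.v *)
From HB Require Import structures.
From mathcomp Require Import all_boot all_order all_algebra.
From mathcomp Require Import all_classical all_reals all_analysis.

Set Implicit Arguments.
Unset Strict Implicit.
Unset Printing Implicit Defensive.

Import Order.TTheory GRing.Theory Num.Theory.
Import numFieldNormedType.Exports.

Local Open Scope classical_set_scope.
Local Open Scope ring_scope.

Notation bvec l := {ffun 'I_l -> bool}.

Definition bzero (l : nat) : bvec l := [ffun => false].

Definition inB0 (l : nat) (v : bvec l) : bool := v != bzero l.

Definition ble (l : nat) (v w : bvec l) : bool := [forall i, v i ==> w i].
Definition blt (l : nat) (v w : bvec l) : bool := ble v w && (v != w).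

Definition colv (l q : nat) (A : 'M[bool]_(l, q)) (j : 'I_q) : bvec l :=
  [ffun i => A i j].

Definition inColumns (l q : nat) (A : 'M[bool]_(l, q)) (v : bvec l) : bool :=
  [exists j, colv A j == v].

Definition rho (R : realType) (l q : nat) (A : 'M[bool]_(l, q))
  (lambda : 'I_q -> R) (v : bvec l) : R :=
  match [pick j | colv A j == v] with
  | Some j => lambda j
  | None => 0
  end.

Definition mutually_independent d (T : measurableType d) (R : realType)
  (P : probability T R) (q : nat) (X : 'I_q -> {RV P >-> nat}) : Prop :=
  forall (J : {set 'I_q}) (B : 'I_q -> set nat),
    (forall j, measurable (B j)) ->
    P (\bigcap_(j in [set j | j \in J]) (X j @^-1` B j)) =
    (\prod_(j in J) P (X j @^-1` B j))%E.

Definition is_poisson d (T : measurableType d) (R : realType)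
  (P : probability T R) (X : {RV P >-> nat}) (lam : R) : Prop :=
  forall U : set nat, measurable U ->
    distribution P X U = poisson_prob lam 0%N U.

Definition Yvec d (T : measurableType d) (R : realType) (P : probability T R)
  (l q : nat) (A : 'M[bool]_(l, q)) (X : 'I_q -> {RV P >-> nat})
  (i : 'I_l) (w : T) : R :=
  \sum_(j < q) (A i j)%:R * (X j w)%:R.

Definition cgf d (T : measurableType d) (R : realType) (P : probability T R)
  (l : nat) (Y : 'I_l -> T -> R) (t : 'rV[R]_l) : R :=
  ln (fine ('E_P[fun w => expR (\sum_(i < l) t ord0 i * Y i w)])).

Definition evec (R : realType) (l : nat) (i : 'I_l) : 'rV[R]_l :=
  delta_mx ord0 i.

Definition partial (R : realType) (l : nat) (i : 'I_l)
  (f : 'rV[R]_l -> R) : 'rV[R]_l -> R :=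
  fun t => derive f t (evec R i).

Definition mixed_partial (R : realType) (l : nat) (s : seq 'I_l)
  (f : 'rV[R]_l -> R) : 'rV[R]_l -> R :=
  foldr (@partial R l) f s.

Definition support_seq (l : nat) (v : bvec l) : seq 'I_l :=
  [seq i <- enum 'I_l | v i].

Definition phi (R : realType) (l : nat) (K : 'rV[R]_l -> R) (v : bvec l) : R :=
  mixed_partial (support_seq v) K 0.

(* Main.v *)
Require Import Defs.
From HB Require Import structures.
From mathcomp Require Import all_boot all_order all_algebra.
From mathcomp Require Import all_classical all_reals all_analysis.
From mathcomp Require Import measurable_realfun.

Set Implicit Arguments.
Unset Strict Implicit.
Unset Printing Implicit Defensive.

Import Order.TTheory GRing.Theory Num.Theory.
Import numFieldNormedType.Exports.
Local Open Scope ring_scope.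

Section PartA.
Variables (R : realType) (l q : nat) (A : 'M[bool]_(l, q)).

Definition cc (t : 'rV[R]_l) (j : 'I_q) : R := \sum_(i < l) t ord0 i * (A i j)%:R.
Definition Fb (b : 'I_q -> R) (t : 'rV[R]_l) : R := \sum_(j < q) b j * expR (cc t j).

Lemma cc_shift h i t j : cc (h *: evec R i + t) j = h * (A i j)%:R + cc t j.
Proof.
rewrite /cc.
have -> : \sum_(i0 < l) (h *: evec R i + t) ord0 i0 * (A i0 j)%:R =
   \sum_(i0 < l) (h * ((i0 == i)%:R * (A i0 j)%:R) + t ord0 i0 * (A i0 j)%:R).
  apply: eq_bigr => i0 _; by rewrite /evec !mxE eqxx /= mulrDl mulrA.
rewrite big_split /= -mulr_sumr (bigD1 i) //= eqxx mul1r big1 ?addr0 //.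
by move=> i0 /negbTE ->; rewrite mul0r.
Qed.

Lemma is_derive_transfer (f : 'rV[R]_l -> R) (g : R -> R) x v y dg :
  (forall h, f (h *: v + x) = g (h + y)) -> is_derive y 1 g dg -> is_derive x v f dg.
Proof.
move=> fg [dgy <-].
have fx : f x = g y by have := fg 0; rewrite scale0r !add0r.
have E : (fun h : R => h^-1 *: ((f \o shift x) (h *: v) - f x)) =
         (fun h : R => h^-1 *: ((g \o shift y) (h *: (1 : R^o)) - g y)).
  apply/funext => h /=; by rewrite /shift fg fx [_%:A]mulr1.
by apply: DeriveDef; rewrite /derivable /derive E.
Qed.

Lemma is_derive_expcc t i j : is_derive t (evec R i) (fun t => expR (cc t j)) ((A i j)%:R * expR (cc t j)).
Proof.
case E: (A i j).
- apply: (@is_derive_transfer _ expR _ _ (cc t j)); last by rewrite mul1r; exact: is_derive_expR.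
  by move=> h; rewrite cc_shift E mulr1.
- apply: (@is_derive_transfer _ (cst (expR (cc t j))) _ _ 0).
    by move=> h; rewrite cc_shift E mulr0 add0r.
  rewrite mul0r; exact: is_derive_cst.
Qed.

Lemma is_derive_Fb b k t i : is_derive t (evec R i) (fun t => Fb b t + k)
   (Fb (fun j => b j * (A i j)%:R) t).
Proof.
have -> : (fun t => Fb b t + k) =
   (\sum_(j < q) (b j \*: (fun t => expR (cc t j)))) + cst k.
  by apply/funext => s; rewrite /Fb fct_sumE /=.
apply: (is_derive_eq (is_deriveD (is_derive_sum (fun j => is_deriveZ (b j) (is_derive_expcc t i j))) (is_derive_cst k t (evec R i)))).
rewrite addr0 /Fb; apply: eq_bigr => j _.
by rewrite /GRing.scale /= mulrA.
Qed.

Definition bs (lam : 'I_q -> R) (s : seq 'I_l) j := lam j * \prod_(i <- s) (A i j)%:R.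

Lemma mixed_Fb lam k s : mixed_partial s (fun t => Fb lam t + k) =
  fun t => Fb (bs lam s) t + (if s is [::] then k else 0).
Proof.
elim: s => [|i s IH] /=.
  apply/funext => t; congr (_ + _); rewrite /Fb; apply: eq_bigr => j _.
  by rewrite /bs big_nil mulr1.
rewrite IH; apply/funext => t; rewrite /partial.
case: (is_derive_Fb (bs lam s) (if s is [::] then k else 0) t i) => _ ->.
rewrite addr0 /Fb; apply: eq_bigr => j _; rewrite /bs big_cons.
by rewrite [(A i j)%:R * _]mulrC mulrA.
Qed.

Lemma Fb0 b : Fb b 0 = \sum_j b j.
Proof.
rewrite /Fb; apply: eq_bigr => j _.
rewrite /cc big1 ?expR0 ?mulr1 // => i _; by rewrite mxE mul0r.
Qed.

Lemma prod_support (v : bvec l) j :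
  \prod_(i <- support_seq v) ((A i j)%:R : R) = (ble v (colv A j))%:R.
Proof.
case: (boolP (ble v (colv A j))) => H.
  rewrite big_seq big1 // => i; rewrite mem_filter => /andP[vi _].
  by move/forallP: H => /(_ i); rewrite vi ffunE /= => ->.
move/forallPn: H => [i]; rewrite negb_imply ffunE => /andP[vi Ai].
have iin : i \in support_seq v by rewrite mem_filter vi mem_enum.
by rewrite (big_rem i) //= (negbTE Ai) mul0r.
Qed.

Lemma phi_eq lam (v : bvec l) : inB0 v ->
  phi (fun t => Fb lam t + (- \sum_j lam j)) v = \sum_j lam j * (ble v (colv A j))%:R.
Proof.
move=> v0; rewrite /phi mixed_Fb.
case Es: (support_seq v) => [|i s].
  exfalso; move/negP: v0; apply; apply/eqP/ffunP => i; rewrite ffunE.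
  apply/negP => vi.
  have : i \in support_seq v by rewrite mem_filter vi mem_enum.
  by rewrite Es.
rewrite addr0 Fb0; apply: eq_bigr => j _; rewrite /bs -Es prod_support //.
Qed.

Hypothesis injA : injective (colv A).

Lemma rhoE (lam : 'I_q -> R) v : rho A lam v = \sum_j lam j * (colv A j == v)%:R.
Proof.
rewrite /rho; case: pickP => [j /eqP Hj | H].
  rewrite (bigD1 j) //= Hj eqxx mulr1 big1 ?addr0 // => j' nj.
  have : colv A j' != colv A j by apply: contra nj => /eqP /injA ->.
  by rewrite Hj => /negbTE ->; rewrite mulr0.
by rewrite big1 // => j _; rewrite H mulr0.
Qed.

Lemma sum_rho (lam : 'I_q -> R) v : (forall j, inB0 (colv A j)) ->
  \sum_(w | inB0 w && ble v w) rho A lam w = \sum_j lam j * (ble v (colv A j))%:R.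
Proof.
move=> c0.
rewrite (eq_bigr _ (fun w _ => rhoE lam w)) exchange_big /=; apply: eq_bigr => j _.
rewrite -mulr_sumr; congr (_ * _).
case: (boolP (ble v (colv A j))) => H.
  rewrite (bigD1 (colv A j)) /=; last by rewrite c0 H.
  rewrite eqxx big1 ?addr0 // => w /andP[_ nw].
  by rewrite eq_sym (negbTE nw).
rewrite big1 // => w /andP[_ Hw]; case E: (colv A j == w) => //.
by move/eqP: E Hw => <-; rewrite (negbTE H).
Qed.


Lemma mobius (psi ph : bvec l -> R) (lam : 'I_q -> R) :
  (forall j, inB0 (colv A j)) ->
  (forall v, inB0 v -> ph v = \sum_j lam j * (ble v (colv A j))%:R) ->
  (forall v, inB0 v -> psi v = ph v - \sum_(w | inB0 w && blt v w) psi w) ->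
  forall v, inB0 v -> psi v = rho A lam v.
Proof.
move=> c0 hph hpsi v.
have [n] := ubnP #|[set i | ~~ v i]|; elim: n v => [|n IH] v Hn v0.
  by rewrite ltn0 in Hn.
rewrite hpsi // hph // -sum_rho // (bigD1 v) /=; last first.
  by rewrite v0; apply/forallP => i; by case: (v i).
have -> : \sum_(w | (inB0 w && ble v w) && (w != v)) rho A lam w =
          \sum_(w | inB0 w && blt v w) rho A lam w.
  by apply: eq_bigl => w; rewrite /blt andbA; congr (_ && _); rewrite eq_sym.
have -> : \sum_(w | inB0 w && blt v w) psi w = \sum_(w | inB0 w && blt v w) rho A lam w.
  apply: eq_bigr => w /andP[w0 vw]; apply: IH w0.
  rewrite ltnS in Hn; apply: (leq_trans _ Hn); apply: proper_card; apply/properP; split.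
    apply/fintype.subsetP => i; rewrite !inE; apply: contra.
    by move/andP: vw => [/forallP /(_ i) /implyP H _]; exact: H.
  move/andP: vw => [/forallP H nvw].
  case: (pickP (fun i => v i != w i)) => [i Hi|H0]; last first.
    exfalso; move/negP: nvw; apply; apply/eqP/ffunP => i.
    by have := H0 i; move/negbFE/eqP.
  by exists i; rewrite !inE; move: (H i) Hi; case: (v i); case: (w i).
by rewrite addrK.
Qed.

End PartA.

Section PartB.
Variables (d : measure_display) (T : measurableType d) (R : realType)
  (P : probability T R) (q : nat) (X : 'I_q -> {RV P >-> nat}) (lam : 'I_q -> R).
Hypothesis lam0 : forall j, 0 <= lam j.
Hypothesis Hpois : forall j, is_poisson (X j) (lam j).
Hypothesis Hind : mutually_independent X.

Definition pp (a : R) (k : nat) : R := a ^+ k / k`!%:R * expR (- a).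

Lemma poisson1 (a : R) k : 0 <= a -> poisson_prob a 0 [set k]%classic = (pp a k)%:E.
Proof.
move=> a0; rewrite /poisson_prob; case: ifPn => Ha.
  by rewrite esum_set1 ?lee_fin ?poisson_pmf_ge0 // /poisson_pmf Ha.
have -> : a = 0 by apply/eqP; rewrite eq_le a0 andbT leNgt.
rewrite diracE /pp oppr0 expR0 mulr1; case: k => [|k].
  by rewrite mem_set // expr0 fact0 divr1.
by rewrite memNset // exprS !mul0r.
Qed.

Lemma mnat (Y : set nat) : measurable Y.
Proof. exact: I. Qed.

Lemma PX1 j k : P (X j @^-1` [set k])%classic = (pp (lam j) k)%:E.
Proof.
by have := @Hpois j [set k]%classic (@mnat _); rewrite /distribution /pushforward => ->; rewrite poisson1.
Qed.

Definition SN {N : nat} (f : {ffun 'I_q -> 'I_N}) : set T :=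
  (\bigcap_(j in [set j | j \in [set: 'I_q]%SET]) (X j @^-1` [set (f j : nat)]))%classic.

Lemma mSN {N} f : measurable (@SN N f).
Proof.
apply: fin_bigcap_measurable; first exact: finite_finset.
by move=> j _; apply: measurable_funPTI; exact: mnat.
Qed.

Lemma PSN {N} f : P (@SN N f) = (\prod_j pp (lam j) (f j))%:E.
Proof.
rewrite /SN Hind; last by move=> j; exact: mnat.
rewrite -prodEFin; apply: eq_big => [j|j _]; first by rewrite finset.in_setT.
exact: PX1.
Qed.

Lemma prod_indic N (f : {ffun 'I_q -> 'I_N}) w :
  \prod_j ((X j w == f j)%:R : R) = \1_(SN f) w.
Proof.
rewrite indicE; case: (boolP [forall j, X j w == f j]) => H.
  have -> : w \in SN f by apply: mem_set => j _; exact/eqP/(forallP H j).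
  by rewrite big1 // => j _; rewrite (forallP H j).
move/forallPn: H => [j Hj].
have -> : (w \in SN f) = false.
  apply: memNset => Hc; have := Hc j; rewrite /= finset.in_setT => /(_ isT) /eqP.
  by rewrite (negbTE Hj).
by rewrite (bigD1 j) //= (negbTE Hj) mul0r.
Qed.

Definition gN (z : 'I_q -> R) N w : R := \prod_j (z j ^+ X j w * (X j w < N)%N%:R).

Lemma trunc_sum (a : R) x N : a ^+ x * (x < N)%N%:R = \sum_(k < N) a ^+ k * (x == k)%:R.
Proof.
case: (ltnP x N) => H.
  rewrite (bigD1 (Ordinal H)) //= eqxx mulr1 big1 ?addr0 // => k nk.
  rewrite (_ : (x == k) = false) ?mulr0 //; apply/negbTE; apply: contra nk => /eqP xk.
  by apply/eqP/val_inj.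
rewrite mulr0 big1 // => k _; rewrite (_ : (x == k) = false) ?mulr0 //.
by apply/negbTE; rewrite neq_ltn (leq_trans (ltn_ord k) H) orbT.
Qed.

Lemma gN_sum z N w : gN z N w =
  \sum_(f : {ffun 'I_q -> 'I_N}) (\prod_j z j ^+ f j) * \1_(SN f) w.
Proof.
rewrite /gN (eq_bigr _ (fun j _ => trunc_sum (z j) (X j w) N)) bigA_distr_bigA /=.
by apply: eq_bigr => f _; rewrite big_split /= prod_indic.
Qed.

Lemma int_gN (z : 'I_q -> R) N : (forall j, 0 <= z j) ->
  (\int[P]_w (gN z N w)%:E)%E = (\prod_j \sum_(k < N) z j ^+ k * pp (lam j) k)%:E.
Proof.
move=> z0.
rewrite (eq_integral (fun w => (\sum_(f : {ffun 'I_q -> 'I_N})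
   ((\prod_j z j ^+ f j)%:E * (\1_(SN f) w)%:E))%E)); last first.
  by move=> w _; rewrite gN_sum -sumEFin; apply: eq_bigr => f _; rewrite EFinM.
have mI (f : {ffun 'I_q -> 'I_N}) : measurable_fun [set: T]%classic
    (fun x => ((\prod_j z j ^+ f j)%:E * (\1_(SN f) x)%:E)%E).
  by apply: measurable_funeM; exact/measurable_EFinP/measurable_indic/mSN.
have nI (f : {ffun 'I_q -> 'I_N}) (x : T) : [set: T]%classic x -> (0 <= (\prod_j z j ^+ f j)%:E * (\1_(SN f) x)%:E)%E.
  move=> _; rewrite -EFinM lee_fin mulr_ge0 // ?prodr_ge0 // => j _; exact: exprn_ge0.
rewrite ge0_integral_sum //.
rewrite (eq_bigr (fun f : {ffun 'I_q -> 'I_N} => (\prod_j (z j ^+ f j * pp (lam j) (f j)))%:E)); last first.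
  move=> f _; rewrite ge0_integralZl_EFin //.
  - rewrite integral_indic; last exact: mSN.
    rewrite setIT.
    transitivity ((\prod_j z j ^+ f j)%:E * (\prod_j pp (lam j) (f j))%:E)%E.
      by congr (_ * _)%E; exact: PSN.
    by rewrite -EFinM -big_split.
  - exact: measurableT.
  - exact/measurable_EFinP/measurable_indic/mSN.
  - by rewrite prodr_ge0 // => j _; exact: exprn_ge0.
by rewrite sumEFin bigA_distr_bigA.
Qed.


Lemma mfun_nat (h : nat -> R) : measurable_fun [set: nat]%classic h.
Proof. by move=> _ Y _; exact: mnat. Qed.

Lemma prod_cvg (s : seq 'I_q) (u : 'I_q -> nat -> R) (L : 'I_q -> R) :
  (forall i, (u i n @[n --> \oo] --> L i)%classic) ->
  ((\prod_(i <- s) u i n) @[n --> \oo] --> \prod_(i <- s) L i)%classic.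
Proof.
move=> hu; elim: s => [|i s IH].
  under eq_fun do rewrite big_nil.
  rewrite big_nil; exact: cvg_cst.
under eq_fun do rewrite big_cons.
rewrite big_cons; exact: cvgM.
Qed.

Lemma pois_cvg (a b : R) :
  ((\sum_(k < n) a ^+ k * pp b k) @[n --> \oo] --> expR (b * (a - 1)))%classic.
Proof.
have E : (fun n => \sum_(k < n) a ^+ k * pp b k) =
         (fun n => series (exp_coeff (a * b)) n * expR (- b)).
  apply/funext => n; rewrite /series /= big_mkord mulr_suml; apply: eq_bigr => k _.
  by rewrite /exp_coeff /pp /= exprMn !mulrA.
rewrite E (_ : expR (b * (a - 1)) = expR (a * b) * expR (- b)); last first.
  by rewrite -expRD mulrBr mulr1 mulrC.
apply: cvgMr_tmp; exact: is_cvg_series_exp_coeff.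
Qed.

Lemma E_prod (z : 'I_q -> R) : (forall j, 0 <= z j) ->
  ('E_P[fun w => (\prod_j z j ^+ X j w)%R] = (\prod_j expR (lam j * (z j - 1)))%:E)%E.
Proof.
move=> z0.
have mg N : measurable_fun [set: T]%classic (fun w => (gN z N w)%:E).
  apply: (proj2 (measurable_EFinP _ _)).
  apply: measurable_prod => j _.
  exact: (measurableT_comp (mfun_nat (fun n => z j ^+ n * (n < N)%N%:R)) (measurable_funP (X j))).
have g0 N w : [set: T]%classic w -> (0 <= (gN z N w)%:E)%E.
  move=> _; rewrite lee_fin prodr_ge0 // => j _; rewrite mulr_ge0 ?exprn_ge0 //.
have nd w : [set: T]%classic w -> nondecreasing_seq (fun N => (gN z N w)%:E).
  move=> _ N M NM; rewrite lee_fin; apply: ler_prod => j _.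
  rewrite mulr_ge0 ?exprn_ge0 //= ler_wpM2l ?exprn_ge0 // ler_nat.
  by case E: (X j w < N)%N => //=; rewrite (leq_trans E NM).
have h1 := @cvg_monotone_convergence _ _ _ P _ measurableT _ mg g0 nd.
have lim_g w : limn (fun N => (gN z N w)%:E) = (\prod_j z j ^+ X j w)%:E.
  apply: (lim_near_cst (@ereal_hausdorff R)).
  exists (\sum_j X j w).+1 => // N /= HN.
  congr (_%:E); apply: eq_bigr => j _.
  rewrite (_ : (X j w < N)%N = true) ?mulr1 //.
  by apply: leq_trans HN; rewrite ltnS (bigD1 j) //= leq_addr.
have h2 : ((\int[P]_w (gN z N w)%:E)%E @[N --> \oo] -->
          (\prod_j expR (lam j * (z j - 1)))%:E)%classic.
  under eq_fun do rewrite int_gN //.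
  apply: cvg_EFin; first exact: nearW.
  rewrite /comp /=. exact: (@prod_cvg (index_enum _) _ _ (fun j => @pois_cvg (z j) (lam j))).
rewrite unlock -(cvg_lim (@ereal_hausdorff R) h2) (cvg_lim (@ereal_hausdorff R) h1).
by apply: eq_integral => w _; rewrite lim_g.
Qed.

Lemma cgfE l (A : 'M[bool]_(l, q)) :
  cgf P (Yvec A X) = fun t => Fb A lam t + (- \sum_j lam j).
Proof.
apply/funext => t; rewrite /cgf.
have -> : (fun w => expR (\sum_(i < l) t ord0 i * Yvec A X i w)) =
          (fun w => \prod_j expR (cc A t j) ^+ X j w).
  apply/funext => w; rewrite /Yvec.
  rewrite (eq_bigr (fun i : 'I_l => \sum_(j < q) t ord0 i * ((A i j)%:R * (X j w)%:R))); last by move=> i _; rewrite mulr_sumr.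
  rewrite exchange_big expR_sum; apply: eq_bigr => j _.
  rewrite -expRM_natr /cc mulr_suml; congr expR; apply: eq_bigr => i _.
  by rewrite mulrA.
rewrite E_prod; last by move=> j; exact: expR_ge0.
rewrite /= -expR_sum expRK /Fb.
rewrite (eq_bigr (fun j => lam j * expR (cc A t j) + - lam j)); last first.
  by move=> j _; rewrite mulrBr mulr1.
by rewrite big_split sumrN.
Qed.

End PartB.

Theorem proposition5 (d : measure_display) (T : measurableType d)
  (R : realType) (P : probability T R) (l q : nat)
  (X : 'I_q -> {RV P >-> nat}) (lambda : 'I_q -> R)
  (A : 'M[bool]_(l, q)) (psi : bvec l -> R) :
  (forall j, 0 <= lambda j) ->
  (forall j, is_poisson (X j) (lambda j)) ->
  mutually_independent X ->
  injective (colv A) ->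
  (forall j, inB0 (colv A j)) ->
  (forall v, inB0 v ->
     psi v = phi (cgf P (Yvec A X)) v
             - \sum_(w | inB0 w && blt v w) psi w) ->
  forall v, inB0 v ->
    psi v = rho A lambda v /\ (psi v != 0 -> inColumns A v).
Proof.
move=> lam0 Hp Hi inj c0 Hpsi.
have Hphi : forall v, inB0 v ->
    phi (cgf P (Yvec A X)) v = \sum_j lambda j * (ble v (colv A j))%:R.
  by move=> u u0; rewrite (cgfE lam0 Hp Hi) phi_eq.
have Hr := mobius inj c0 Hphi Hpsi.
move=> v v0; split; first exact: Hr.
rewrite Hr // /rho; case: pickP => [j Hj _|_]; last by rewrite eqxx.
by apply/existsP; exists j.
Qed.
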